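(* Let $N\ge1$, let $d_1,\dots,d_N$ be positive integers, and for each $l$ fix a basis $\{\mathbf{G}^{(l)}_i\}_{i=0}^{d_l^2-1}$ of the complex $d_l\times d_l$ matrices with $\mathbf{G}^{(l)}_0=\mathbf{I}_{d_l}$, $\mathrm{Tr}(\mathbf{G}^{(l)}_i)=0$ and $\mathrm{Tr}\big((\mathbf{G}^{(l)}_i)^\dagger\mathbf{G}^{(l)}_{i'}\big)=\kappa_l\delta_{ii'}$ for $i,i'\ge1$, where $\kappa_l\ge1$. For every quantum state $\rho$ on $\mathbb{C}^{d_1}\otimes\cdots\otimes\mathbb{C}^{d_N}$, its correlation tensor $\mathcal{T}^{(1\cdots N)}\in\mathbb{C}^{(d_1^2-1)\times\cdots\times(d_N^2-1)}$, with entries $t^{(1\cdots N)}_{i_1\cdots i_N}=\frac{d_1\cdots d_N}{\kappa_1\cdots\kappa_N}\mathrm{Tr}\big(\rho\,(\mathbf{G}^{(1)}_{i_1}\otimes\cdots\otimes\mathbf{G}^{(N)}_{i_N})\big)$ ($i_l\in\{1,\dots,d_l^2-1\}$), satisfies $\|\mathcal{T}^{(1\cdots N)}\|_F^2\le\mathfrak{m}^{(1\cdots N)}$, where, with $D=d_1\cdots d_N$, $K=\kappa_1\cdots\kappa_N$ and $d=\max_{l}d_l$, $$\mathfrak{m}^{(1\cdots N)}=\begin{cases}\frac{d_1^2-d_1}{\kappa_1}, & N=1,\\[2pt] \frac{D}{K}\Big(D+\frac{1}{N-1}-\frac{D}{N-1}\sum_{l=1}^N\frac{1}{d_l^2}\Big),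 & N=2,\ \text{or } N\ge3 \text{ and } \frac{D}{d^2}<1,\\[2pt] \frac{D}{K}\Big(D+\frac{2}{N-2}-\frac{D}{N-2}\sum_{l=1}^N\frac{1}{d_l^2}\Big), & N\ge3 \text{ and } \frac{D}{d^2}\ge1.\end{cases}$$
   Context: A quantum state is a positive semidefinite trace-one matrix. $\|\cdot\|_F$ is the Frobenius norm (square root of the sum of squared moduli of all entries). *)

(* Defs.v *)
From HB Require Import structures.
From mathcomp Require Import all_boot all_order all_algebra.
Set Implicit Arguments. Unset Strict Implicit. Unset Printing Implicit Defensive.
Import Order.TTheory GRing.Theory Num.Theory.
Local Open Scope ring_scope.

Definition adj (C : numClosedFieldType) m n (A : 'M[C]_(m, n)) : 'M[C]_(n, m) :=
  (map_mx Num.conj A)^T.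

Definition psd (C : numClosedFieldType) n (A : 'M[C]_n) : Prop :=
  adj A = A /\ forall v : 'cV[C]_n, 0 <= (adj v *m A *m v) 0 0.

Definition is_state (C : numClosedFieldType) n (A : 'M[C]_n) : Prop :=
  psd A /\ \tr A = 1.

(* Computational-basis index set of C^{d_1} (x) ... (x) C^{d_N}:
   tuples (x_1,...,x_N) with x_l < d_l. *)
Definition Idx (N : nat) (d : 'I_N -> nat) : finType :=
  {dffun forall l : 'I_N, 'I_(d l)}.

(* N-fold Kronecker product A_1 (x) ... (x) A_N, as a matrix on the
   tensor-product space, whose basis is indexed (via enum_val) by Idx d. *)
Definition ktens (C : numClosedFieldType) (N : nat) (d : 'I_N -> nat)
    (A : forall l : 'I_N, 'M[C]_(d l)) : 'M[C]_#|Idx d| :=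
  \matrix_(a, b) \prod_(l < N)
     A l ((enum_val a : Idx d) l) ((enum_val b : Idx d) l).

(* Index set of the correlation tensor: i_l in {1, ..., d_l^2 - 1},
   encoded as j_l : 'I_(d_l^2 - 1) with i_l = j_l + 1. *)
Definition TIdx (N : nat) (d : 'I_N -> nat) : finType :=
  {dffun forall l : 'I_N, 'I_((d l) ^ 2 - 1)}.

Lemma shift_idx_proof (n : nat) (j : 'I_(n ^ 2 - 1)) : (j.+1 < n ^ 2)%N.
Proof. have := ltn_ord j; rewrite ltn_subRL addnC addn1; exact. Qed.

Definition shift_idx (n : nat) (j : 'I_(n ^ 2 - 1)) : 'I_(n ^ 2) :=
  Ordinal (shift_idx_proof j).

Definition corr_tensor (C : numClosedFieldType) (N : nat) (d : 'I_N -> nat)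
    (kappa : 'I_N -> C) (G : forall l : 'I_N, 'I_((d l) ^ 2) -> 'M[C]_(d l))
    (rho : 'M[C]_#|Idx d|) (i : TIdx d) : C :=
  ((\prod_(l < N) (d l)%:R) / (\prod_(l < N) kappa l)) *
  \tr (rho *m ktens (fun l => G l (shift_idx (i l)))).

Definition corr_frob2 (C : numClosedFieldType) (N : nat) (d : 'I_N -> nat)
    (kappa : 'I_N -> C) (G : forall l : 'I_N, 'I_((d l) ^ 2) -> 'M[C]_(d l))
    (rho : 'M[C]_#|Idx d|) : C :=
  \sum_(i : TIdx d) `|corr_tensor kappa G rho i| ^+ 2.

Definition mbound (C : numClosedFieldType) (N : nat) (d : 'I_N -> nat)
    (kappa : 'I_N -> C) : C :=
  let D : C := (\prod_(l < N) d l)%N%:R in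
  let K : C := \prod_(l < N) kappa l in
  let dmax : C := (\max_(l < N) d l)%N%:R in
  let S : C := \sum_(l < N) ((d l)%:R ^+ 2)^-1 in
  if N == 1%N then
    (\sum_(l < N) (((d l)%:R ^+ 2 - (d l)%:R) / kappa l))
  else if (N == 2%N) || (D / dmax ^+ 2 < 1) then
    D / K * (D + (N.-1)%:R^-1 - D / (N.-1)%:R * S)
  else
    D / K * (D + 2 / (N - 2)%:R - D / (N - 2)%:R * S).

(* Main.v *)
Require Import Defs.
From HB Require Import structures.
From mathcomp Require Import all_boot all_order all_algebra.
From mathcomp Require Import spectral sesquilinear ring.
Set Implicit Arguments. Unset Strict Implicit. Unset Printing Implicit Defensive.
Import Order.TTheory GRing.Theory Num.Theory.
Local Open Scope ring_scope.
From mathcomp Require Import zify.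

Section DD.
Variable R : comRingType.
Lemma dd_sum (I : finType) (T_ : I -> finType) (F : forall i, T_ i -> R) :
  \sum_(f : {dffun forall i, T_ i}) \prod_i F i (f i) = \prod_i \sum_(j : T_ i) F i j.
Proof.
pose P_ := fun i => [ffun j => F i j].
transitivity (\prod_i \sum_(j : T_ i) P_ i j); last by apply: eq_bigr => i _; apply: eq_bigr => j _; rewrite ffunE.
rewrite (eq_bigr (fun i => \sum_(j in tagged_with T_ i) untag 0 (P_ i) j)); last first.
  move=> i _; exact: (big_tag (fun i => P_ i)).
rewrite bigA_distr_big_dep -(@big_fprod R 0 1 *%R +%R I T_ P_).
rewrite (reindex (@fprod_of_dffun _ T_)); last exact/onW_bij/fprod_of_dffun_bij.
apply: eq_bigr => f _; apply: eq_bigr => i _.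
by rewrite /fprod_of_dffun fprodE ffunE.
Qed.
End DD.
Section Compl.
Variable C : numClosedFieldType.

Lemma sum_mxvec n (F : 'I_(n*n) -> C) :
  \sum_k F k = \sum_x \sum_y F (mxvec_index x y).
Proof.
rewrite pair_big /= (reindex (uncurry (@mxvec_index n n))) /=; last first.
  by case: (@curry_mxvec_bij n n) => g g1 g2; exists g => k _; [apply: g1|apply: g2].
by apply: eq_bigr => -[x y].
Qed.

Lemma tr_adj_mul n (A B : 'M[C]_n) :
  \tr (adj A *m B) = \sum_x \sum_y (A x y)^* * B x y.
Proof.
rewrite /mxtrace exchange_big; apply: eq_bigr => x _ /=.
rewrite mxE; apply: eq_bigr => y _; by rewrite !mxE.
Qed.

Lemma completeness n (hn : (0 < n)%N) (G : 'I_(n^2) -> 'M[C]_n) (kap : C)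
  (hk : kap != 0)
  (hG0 : forall i : 'I_(n^2), val i = 0%N -> G i = 1%:M)
  (htr : forall i : 'I_(n^2), (0 < val i)%N -> \tr (G i) = 0)
  (horth : forall i i' : 'I_(n^2), (0 < val i)%N -> (0 < val i')%N ->
        \tr (adj (G i) *m G i') = kap * (i == i')%:R)
  (x y x' y' : 'I_n) :
  \sum_(j < n^2) (if val j == 0%N then n%:R else kap)^-1 * G j x y * (G j x' y')^*
  = ((x == x') && (y == y'))%:R.
Proof.
set nu := fun j : 'I_(n^2) => if val j == 0%N then n%:R else kap.
have nu0 : forall j, nu j != 0.
  by move=> j; rewrite /nu; case: ifP => _ //; rewrite pnatr_eq0 -lt0n.
pose U : 'M[C]_(n^2, n*n) := \matrix_(j, k) mxvec (G j) 0 k.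
pose M := map_mx (@Num.conj_op C) U.
pose Wi : 'M[C]_(n^2) := diag_mx (\row_j (nu j)^-1).
have trE : forall j j', \tr (adj (G j) *m G j') = nu j * (j == j')%:R.
  move=> j j'; rewrite /nu.
  case: (posnP (nat_of_ord j)) => [j0|jp]; case: (posnP (nat_of_ord j')) => [j'0|j'p].
  - rewrite (hG0 _ j0) (hG0 _ j'0).
    have -> : j == j' by apply/eqP/val_inj; rewrite /= j0 j'0.
    rewrite /adj map_mx1 trmx1 mul1mx mxtrace1 mulr1 //.
  - rewrite (hG0 _ j0) /adj map_mx1 trmx1 mul1mx htr //.
    have -> : (j == j') = false by apply/negbTE/eqP => e; move: j'p; rewrite -e j0.
    by rewrite mulr0.
  - rewrite (hG0 _ j'0) mulmx1.
    have -> : (j == j') = false by apply/negbTE/eqP => e; move: jp; rewrite e j'0.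
    rewrite mulr0 /adj mxtrace_tr.
    have -> : \tr (map_mx Num.conj (G j)) = (\tr (G j))^* by rewrite /mxtrace rmorph_sum; apply: eq_bigr => i _; rewrite mxE.
    by rewrite htr // conjC0.
  - by rewrite horth.
have h1 : (Wi *m M) *m U^T = 1%:M.
  apply/matrixP => j j'; rewrite !mxE.
  transitivity ((nu j)^-1 * \tr (adj (G j) *m G j')).
    rewrite tr_adj_mul (sum_mxvec (fun k => (Wi *m M) j k * U^T k j')) mulr_sumr.
    apply: eq_bigr => a _; rewrite mulr_sumr; apply: eq_bigr => b _.
    rewrite !mxE (bigD1 j) //= big1 ?addr0; last first.
      by move=> k /negbTE kj; rewrite !mxE eq_sym kj mulr0n mul0r.
    by rewrite !mxE eqxx mulr1n !mxvecE mulrA.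
  by rewrite trE mulrA mulVf ?mul1r.
have h2 := mulmx1C (h1 : (Wi *m M : 'M[C]_(n*n)) *m (U^T : 'M[C]_(n*n)) = 1%:M).
have := congr1 (fun A : 'M[C]_(n*n) => A (mxvec_index x y) (mxvec_index x' y')) h2.
rewrite !mxE /=.
have -> : (mxvec_index x y == mxvec_index x' y') = ((x == x') && (y == y')).
  apply/eqP/andP => [|[/eqP-> /eqP->]//].
  by rewrite /mxvec_index => /cast_ord_inj/enum_rank_inj [-> ->].
move=> <-.
apply: eq_bigr => j _; rewrite !mxE !mxvecE (bigD1 j) //= big1 ?addr0; last first.
  by move=> k /negbTE kj; rewrite !mxE eq_sym kj mulr0n mul0r.
rewrite !mxE eqxx mulr1n !mxvecE mulrA; congr (_ * _); rewrite mulrC //.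
Qed.
End Compl.
Section Kern.
Variable C : numClosedFieldType.
Variables (N : nat) (d : 'I_N -> nat).

Definition rh (rho : 'M[C]_#|Idx d|) (a b : Idx d) : C := rho (enum_rank a) (enum_rank b).

Lemma sum_enum (F : 'I_#|Idx d| -> C) : \sum_x F x = \sum_(a : Idx d) F (enum_rank a).
Proof.
rewrite (reindex (@enum_rank (Idx d))) //.
by exists (@enum_val _ (Idx d)) => x _; [apply: enum_rankK|apply: enum_valK].
Qed.

Lemma tr_ktens (rho : 'M[C]_#|Idx d|) (A : forall l, 'M[C]_(d l)) :
  \tr (rho *m ktens A) = \sum_(a : Idx d) \sum_(b : Idx d) rh rho a b * \prod_l A l (b l) (a l).
Proof.
rewrite /mxtrace sum_enum; apply: eq_bigr => a _.
rewrite mxE sum_enum; apply: eq_bigr => b _.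
by rewrite /ktens mxE !enum_rankK.
Qed.

Definition KS (rho : 'M[C]_#|Idx d|)
  (k : forall l, 'I_(d l) -> 'I_(d l) -> 'I_(d l) -> 'I_(d l) -> C) : C :=
  \sum_(a : Idx d) \sum_(b : Idx d) \sum_(a' : Idx d) \sum_(b' : Idx d)
    rh rho a b * (rh rho a' b')^* * \prod_l k l (a l) (b l) (a' l) (b' l).

Lemma exch5 (I A : finType) (F : I -> A -> A -> A -> A -> C) :
  \sum_i \sum_a \sum_b \sum_a' \sum_b' F i a b a' b' =
  \sum_a \sum_b \sum_a' \sum_b' \sum_i F i a b a' b'.
Proof.
rewrite exchange_big; apply: eq_bigr => a _.
rewrite exchange_big; apply: eq_bigr => b _.
rewrite exchange_big; apply: eq_bigr => a' _.
by rewrite exchange_big.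
Qed.

Lemma kernel (rho : 'M[C]_#|Idx d|) (T_ : 'I_N -> finType)
  (g : forall l, T_ l -> 'M[C]_(d l)) (w : forall l, T_ l -> C) :
  \sum_(i : {dffun forall l, T_ l}) (\prod_l w l (i l)) *
     (\tr (rho *m ktens (fun l => g l (i l))) * (\tr (rho *m ktens (fun l => g l (i l))))^*)
  = KS rho (fun l a b a' b' => \sum_j w l j * g l j b a * (g l j b' a')^*).
Proof.
rewrite /KS.
have e1 : forall (X Y : Idx d -> Idx d -> C),
  (\sum_a \sum_b X a b) * (\sum_a \sum_b Y a b)^* =
  \sum_a \sum_b \sum_a' \sum_b' X a b * (Y a' b')^*.
  move=> X Y; rewrite rmorph_sum big_distrl; apply: eq_bigr => a _.
  rewrite big_distrl; apply: eq_bigr => b _.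
  rewrite big_distrr; apply: eq_bigr => a' _.
  by rewrite rmorph_sum big_distrr.
under eq_bigr => i _ do rewrite !tr_ktens e1.
transitivity (\sum_(i : {dffun forall l, T_ l}) \sum_a \sum_b \sum_a' \sum_b' \prod_l w l (i l) * (rh rho a b * \prod_l g l (i l) (b l) (a l) *
                 (rh rho a' b' * \prod_l g l (i l) (b' l) (a' l))^* )).
  apply: eq_bigr => i _.
  rewrite mulr_sumr; apply: eq_bigr => a _.
  rewrite mulr_sumr; apply: eq_bigr => b _.
  rewrite mulr_sumr; apply: eq_bigr => a' _.
  by rewrite mulr_sumr.
rewrite exch5.
apply: eq_bigr => a _; apply: eq_bigr => b _; apply: eq_bigr => a' _; apply: eq_bigr => b' _.
rewrite -dd_sum mulr_sumr; apply: eq_bigr => i _.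
rewrite rmorphM rmorph_prod /= !big_split /=.
ring.
Qed.
End Kern.

Section Pure.
Local Unset Implicit Arguments.
Variable C : numClosedFieldType.
Variables (N : nat) (d : 'I_N -> nat) (kappa : 'I_N -> C)
  (G : forall l : 'I_N, 'I_((d l) ^ 2) -> 'M[C]_(d l)).
Hypothesis hd : forall l, (0 < d l)%N.
Hypothesis hG0 : forall l (i : 'I_((d l) ^ 2)), val i = 0%N -> G l i = 1%:M.
Hypothesis htr : forall l (i : 'I_((d l) ^ 2)), (0 < val i)%N -> \tr (G l i) = 0.
Hypothesis horth : forall l (i i' : 'I_((d l) ^ 2)), (0 < val i)%N -> (0 < val i')%N ->
        \tr (adj (G l i) *m G l i') = kappa l * (i == i')%:R.
Hypothesis hkappa : forall l, 1 <= kappa l.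

Lemma kappa_neq0 l : kappa l != 0.
Proof. by apply: lt0r_neq0; apply: lt_le_trans (hkappa l). Qed.

Lemma sq_pos l : (0 < (d l) ^ 2)%N.
Proof. by rewrite expn_gt0 hd. Qed.

Definition om l (j : 'I_((d l) ^ 2)) : C :=
  (if val j == 0%N then (d l)%:R else kappa l)^-1.

Definition Ek l (a b a' b' : 'I_(d l)) : C := ((a == a') && (b == b'))%:R.
Definition Zk l (a b a' b' : 'I_(d l)) : C := ((a == b) && (a' == b'))%:R.

Lemma kfull l a b a' b' :
  \sum_j om l j * G l j b a * (G l j b' a')^* = Ek l a b a' b'.
Proof.
rewrite /om (completeness (hd l) (kappa_neq0 l) (hG0 l) (htr l) (horth l)).
by rewrite /Ek andbC.
Qed.

Lemma kzero l a b a' b' :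
  \sum_j ((val j == 0%N)%:R * om l j) * G l j b a * (G l j b' a')^* =
  (d l)%:R^-1 * Zk l a b a' b'.
Proof.
rewrite (bigD1 (Ordinal (sq_pos l))) //= big1 ?addr0; last first.
  move=> j jne; have -> : (val j == 0%N) = false.
    by apply/negbTE; apply: contra jne => /eqP e; apply/eqP/val_inj.
  by rewrite !mul0r.
rewrite /om /=.
rewrite (hG0 l (Ordinal (sq_pos l))) // !mxE rmorph_nat mul1r.
by rewrite /Zk -mulrA -natrM [b == a]eq_sym [b' == a']eq_sym mulnb.
Qed.

Lemma knz l a b a' b' :
  \sum_j ((val j != 0%N)%:R * om l j) * G l j b a * (G l j b' a')^* =
  Ek l a b a' b' - (d l)%:R^-1 * Zk l a b a' b'.
Proof.
rewrite -kfull -kzero -sumrB; apply: eq_bigr => j _.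
by case: (val j == 0%N); rewrite /= ?mul1r ?mul0r ?subr0 ?sub0r ?subrr.
Qed.

Lemma shift_sum_gen (m m' : nat) (e : m = m'.+1) (F : 'I_m -> C) (h : 'I_m' -> 'I_m)
  (hh : forall j, val (h j) = (val j).+1) :
  \sum_(x : 'I_m) (val x != 0%N)%:R * F x = \sum_j F (h j).
Proof.
subst m.
rewrite big_ord_recl /= mul0r add0r; apply: eq_bigr => j _.
rewrite mul1r; congr (F _); apply: val_inj; by rewrite hh.
Qed.

Lemma kshift l a b a' b' :
  \sum_(j : 'I_((d l) ^ 2 - 1)) 1 * G l (shift_idx j) b a * (G l (shift_idx j) b' a')^* =
  kappa l * (Ek l a b a' b' - (d l)%:R^-1 * Zk l a b a' b').
Proof.
rewrite -knz mulr_sumr.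
under eq_bigr => j _ do rewrite mul1r.
have e : (d l ^ 2 = (d l ^ 2 - 1).+1)%N by rewrite subn1 prednK // sq_pos.
rewrite -(@shift_sum_gen _ _ e (fun x => G l x b a * (G l x b' a')^*) (@shift_idx (d l))) //.
apply: eq_bigr => x _; rewrite /om.
case: (val x == 0%N); first by rewrite !mul0r mulr0.
by rewrite !mul1r !mulrA mulfV ?kappa_neq0 // mul1r.
Qed.

Lemma KS_ext rho (k1 k2 : forall l, 'I_(d l) -> 'I_(d l) -> 'I_(d l) -> 'I_(d l) -> C) :
  (forall l a b a' b', k1 l a b a' b' = k2 l a b a' b') -> KS rho k1 = KS rho k2.
Proof.
move=> e; rewrite /KS; apply: eq_bigr => a _; apply: eq_bigr => b _.
apply: eq_bigr => a' _; apply: eq_bigr => b' _; congr (_ * _).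
by apply: eq_bigr => l _; rewrite e.
Qed.

Lemma KS_scale rho (s : 'I_N -> C) (k : forall l, 'I_(d l) -> 'I_(d l) -> 'I_(d l) -> 'I_(d l) -> C) :
  KS rho (fun l a b a' b' => s l * k l a b a' b') = (\prod_l s l) * KS rho k.
Proof.
rewrite /KS mulr_sumr; apply: eq_bigr => a _; rewrite mulr_sumr; apply: eq_bigr => b _.
rewrite mulr_sumr; apply: eq_bigr => a' _; rewrite mulr_sumr; apply: eq_bigr => b' _.
by rewrite big_split /= mulrCA.
Qed.

Definition pmx (psi : 'I_#|Idx d| -> C) : 'M[C]_#|Idx d| :=
  \matrix_(x, y) (psi x * (psi y)^*).

Lemma KS_swap psi k :
  KS (pmx psi) k = KS (pmx psi) (fun l a b a' b' => k l a a' b b').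
Proof.
rewrite /KS; apply: eq_bigr => a _.
rewrite exchange_big /=; apply: eq_bigr => b _; apply: eq_bigr => a' _.
apply: eq_bigr => b' _; rewrite /rh !mxE !rmorphM /= conjCK.
congr (_ * _); ring.
Qed.

Lemma sum_delta (T : finType) (x0 : T) (F : T -> C) :
  \sum_x F x * (x0 == x)%:R = F x0.
Proof.
rewrite (bigD1 x0) //= eqxx mulr1 big1 ?addr0 // => x.
by rewrite eq_sym => /negbTE ->; rewrite mulr0.
Qed.

Lemma prod_ind (P : 'I_N -> bool) : \prod_l (P l)%:R = ([forall l, P l]%:R : C).
Proof.
case: (boolP [forall l, P l]) => [/forallP h|/forallPn [l hl]].
  by apply: big1 => l _; rewrite h.
by rewrite (bigD1 l) //= (negbTE hl) mul0r.
Qed.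

Lemma dffun_eqE (a a' : Idx d) : [forall l, a l == a' l] = (a == a').
Proof.
apply/forallP/eqP => [h|-> l //]; apply/ffunP => l; exact/eqP/h.
Qed.

Lemma KS_Ek rho :
  KS rho (Ek) = \sum_(a : Idx d) \sum_(b : Idx d) rh rho a b * (rh rho a b)^*.
Proof.
rewrite /KS; apply: eq_bigr => a _; apply: eq_bigr => b _.
transitivity (\sum_(a' : Idx d) (\sum_(b' : Idx d) rh rho a b * (rh rho a' b')^* * (b == b')%:R) * (a == a')%:R).
  apply: eq_bigr => a' _; rewrite mulr_suml; apply: eq_bigr => b' _.
  rewrite /Ek.
  under eq_bigr => l _ do rewrite -mulnb natrM.
  rewrite big_split /= !prod_ind !dffun_eqE; ring.
rewrite sum_delta sum_delta //.
Qed.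

Lemma KS_E psi (hpsi : \sum_x psi x * (psi x)^* = 1) :
  KS (pmx psi) Ek = 1.
Proof.
rewrite KS_Ek.
have hs : \sum_(a : Idx d) psi (enum_rank a) * (psi (enum_rank a))^* = 1.
  by rewrite -hpsi (sum_enum (fun x => psi x * (psi x)^*)).
rewrite -[1]mulr1 -{1}hs -[in X in _ * X]hs big_distrl /=; apply: eq_bigr => a _.
rewrite big_distrr /=; apply: eq_bigr => b _.
rewrite /rh !mxE rmorphM /= conjCK; ring.
Qed.


Definition J : finType := {dffun forall l : 'I_N, 'I_((d l) ^ 2)}.
Definition tt rho (i : J) : C := \tr (rho *m ktens (fun l => G l (i l))).
Definition cc rho (i : J) : C := (\prod_l om l (i l)) * (tt rho i * (tt rho i)^*).

Lemma cc_sum_w (w : forall l, 'I_((d l) ^ 2) -> bool) rho :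
  \sum_(i : J) [forall l, w l (i l)]%:R * cc rho i =
  KS rho (fun l a b a' b' => \sum_j ((w l j)%:R * om l j) * G l j b a * (G l j b' a')^*).
Proof.
rewrite -(kernel rho (T_ := fun l => ('I_((d l) ^ 2) : finType)) G (fun l j => (w l j)%:R * om l j)).
apply: eq_bigr => i _; rewrite /cc /tt big_split /= prod_ind mulrA //.
Qed.

Lemma cc_sum1 psi (hpsi : \sum_x psi x * (psi x)^* = 1) :
  \sum_(i : J) cc (pmx psi) i = 1.
Proof.
transitivity (\sum_(i : J) [forall l, (fun l (_ : 'I_((d l) ^ 2)) => true) l (i l)]%:R * cc (pmx psi) i).
  by apply: eq_bigr => i _; rewrite (_ : [forall l, _] = true) ?mul1r //; apply/forallP.
apply: etrans; first exact: (cc_sum_w (fun l (_ : 'I_((d l) ^ 2)) => true) (pmx psi)).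
rewrite -[RHS](KS_E psi hpsi); apply: KS_ext => l a b a' b'.
by rewrite -kfull; apply: eq_bigr => j _; rewrite /= mulr1n mul1r.
Qed.

Definition DD : C := \prod_l (d l)%:R.

Lemma d_neq0 l : (d l)%:R != 0 :> C.
Proof. by rewrite pnatr_eq0 -lt0n hd. Qed.

Lemma DD_neq0 : DD != 0.
Proof. by rewrite /DD prodf_seq_neq0; apply/allP => l _; rewrite d_neq0. Qed.

Definition Xs rho l := \sum_(i : J) (val (i l) == 0%N)%:R * cc rho i.
Definition Ys rho l := \sum_(i : J) [forall j, (j == l) || (val (i j) == 0%N)]%:R * cc rho i.

Lemma XY psi l : (d l)%:R * Xs (pmx psi) l = (DD / (d l)%:R) * Ys (pmx psi) l.
Proof.
have eX : Xs (pmx psi) l = (d l)%:R^-1 *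
   KS (pmx psi) (fun j a b a' b' => if j == l then Zk j a b a' b' else Ek j a b a' b').
  rewrite /Xs.
  transitivity (\sum_(i : J) [forall j, (j != l) || (val (i j) == 0%N)]%:R * cc (pmx psi) i).
    apply: eq_bigr => i _.
    rewrite (_ : [forall j, _] = (val (i l) == 0%N)) //.
    apply/forallP/idP => [h|h j]; first by move: (h l); rewrite eqxx.
    by case: (eqVneq j l) => [->|].
  rewrite (cc_sum_w (fun j (x : 'I_((d j) ^ 2)) => (j != l) || (val x == 0%N))).
  have -> : (d l)%:R^-1 = \prod_j (if j == l then (d j)%:R^-1 else 1) :> C.
    rewrite (bigD1 l) //= eqxx big1 ?mulr1 // => j /negbTE -> //.
  rewrite -KS_scale; apply: KS_ext => j a b a' b'.
  case: (eqVneq j l) => [e|ne] /=.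
    by subst j; rewrite -kzero; apply: eq_bigr => x _.
  by rewrite [RHS]mul1r -kfull; apply: eq_bigr => x _; rewrite mul1r.
have eY : Ys (pmx psi) l = (\prod_j (if j == l then 1 else (d j)%:R^-1)) *
   KS (pmx psi) (fun j a b a' b' => if j == l then Ek j a b a' b' else Zk j a b a' b').
  rewrite /Ys (cc_sum_w (fun j (x : 'I_((d j) ^ 2)) => (j == l) || (val x == 0%N))) -KS_scale; apply: KS_ext => j a b a' b'.
  case: (eqVneq j l) => [e|ne] /=.
    by subst j; rewrite [RHS]mul1r -kfull; apply: eq_bigr => x _; rewrite mul1r.
  by rewrite -kzero; apply: eq_bigr => x _.
have eS : KS (pmx psi) (fun j a b a' b' => if j == l then Zk j a b a' b' else Ek j a b a' b') =
          KS (pmx psi) (fun j a b a' b' => if j == l then Ek j a b a' b' else Zk j a b a' b').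
  rewrite KS_swap; apply: KS_ext => j a b a' b'.
  by case: (j == l); rewrite /Zk /Ek.
rewrite eX eY eS mulrA mulfV ?d_neq0 // mul1r mulrA.
suff -> : DD / (d l)%:R * (\prod_j (if j == l then 1 else (d j)%:R^-1)) = 1 by rewrite mul1r.
rewrite /DD (bigD1 l) //= (bigD1 l (P := predT)) //= eqxx mul1r.
rewrite [_ * _ / _]mulrAC mulfV ?d_neq0 // mul1r -big_split /=; apply: big1 => j /negbTE ->.
by rewrite mulfV ?d_neq0.
Qed.

Definition i0 : J := [ffun l => Ordinal (sq_pos l)].

Lemma ktens1 : ktens (fun l => 1%:M) = 1%:M :> 'M[C]_#|Idx d|.
Proof.
apply/matrixP => x y; rewrite !mxE.
under eq_bigr do rewrite mxE.
rewrite prod_ind dffun_eqE.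
by rewrite (inj_eq enum_val_inj).
Qed.

Lemma tr_pmx psi : \tr (pmx psi) = \sum_x psi x * (psi x)^*.
Proof. by apply: eq_bigr => x _; rewrite mxE. Qed.

Lemma cc_i0 psi (hpsi : \sum_x psi x * (psi x)^* = 1) : cc (pmx psi) i0 = DD^-1.
Proof.
rewrite /cc /tt.
have -> : ktens (fun l => G l (i0 l)) = ktens (fun l => 1%:M).
  apply/matrixP => x y; rewrite /ktens !mxE.
  rewrite (eq_bigr (fun l => (1%:M : 'M[C]_(d l)) (enum_val x l) (enum_val y l))) // => l _.
  by rewrite /i0 ffunE hG0.
rewrite ktens1 mulmx1 tr_pmx hpsi rmorph1 !mulr1 /DD -prodfV.
apply: eq_bigr => l _.
by rewrite /om /i0 ffunE /=.
Qed.

Lemma cc_ge0 rho i : 0 <= cc rho i.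
Proof.
rewrite /cc mulr_ge0 ?mul_conjC_ge0 //; apply: prodr_ge0 => l _.
rewrite /om invr_ge0; case: ifP => _; first exact: ler0n.
by apply: le_trans (hkappa l).
Qed.


Definition KK : C := \prod_l kappa l.

Lemma kappa_gt0 l : 0 < kappa l.
Proof. by apply: lt_le_trans (hkappa l). Qed.

Lemma KK_gt0 : 0 < KK.
Proof. by apply: prodr_gt0 => l _; exact: kappa_gt0. Qed.

Lemma DD_gt0 : 0 < DD.
Proof. by apply: prodr_gt0 => l _; rewrite ltr0n hd. Qed.

Lemma corr_cc rho : corr_frob2 kappa G rho =
  (DD ^+ 2 / KK) * \sum_(i : J) [forall l, val (i l) != 0%N]%:R * cc rho i.
Proof.
rewrite /corr_frob2 /corr_tensor -/DD -/KK.
have cf0 : 0 <= DD / KK by rewrite divr_ge0 // ltW // ?DD_gt0 ?KK_gt0.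
under eq_bigr do rewrite normrM exprMn.
rewrite (ger0_norm cf0).
under eq_bigr do rewrite normCK.
rewrite -mulr_sumr.
have e1 : \sum_(i : TIdx d) \tr (rho *m ktens (fun l => G l (shift_idx (i l)))) *
        (\tr (rho *m ktens (fun l => G l (shift_idx (i l)))))^* =
        KK * KS rho (fun l a b a' b' => Ek l a b a' b' - (d l)%:R^-1 * Zk l a b a' b').
  transitivity (\sum_(i : {dffun forall l, ('I_((d l) ^ 2 - 1) : finType)})
     (\prod_l (fun l (_ : 'I_((d l) ^ 2 - 1)) => (1 : C)) l (i l)) *
     (\tr (rho *m ktens (fun l => (fun l j => G l (shift_idx j)) l (i l))) *
        (\tr (rho *m ktens (fun l => (fun l j => G l (shift_idx j)) l (i l))))^*)).
    by apply: eq_bigr => i _; rewrite big1 ?mul1r.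
  apply: etrans; first exact: (kernel rho (T_ := fun l => ('I_((d l) ^ 2 - 1) : finType))
      (fun l j => G l (shift_idx j)) (fun l (_ : 'I_((d l) ^ 2 - 1)) => (1 : C))).
  rewrite -KS_scale; apply: KS_ext => l a b a' b'.
  by rewrite -kshift.
have e2 : \sum_(i : J) [forall l, val (i l) != 0%N]%:R * cc rho i =
   KS rho (fun l a b a' b' => Ek l a b a' b' - (d l)%:R^-1 * Zk l a b a' b').
  apply: etrans; first exact: (cc_sum_w (fun l (x : 'I_((d l) ^ 2)) => val x != 0%N) rho).
  by apply: KS_ext => l a b a' b'; rewrite -knz.
rewrite e1 e2 /DD /KK; field.
by apply/lt0r_neq0; exact: KK_gt0.
Qed.


Definition zs (i : J) : nat := \sum_l (val (i l) == 0%N).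
Definition ss (i : J) : nat := \sum_l (val (i l) != 0%N).

Lemma zs_ss i : (zs i + ss i)%N = N.
Proof.
rewrite /zs /ss -big_split /=.
rewrite (eq_bigr (fun _ => 1%N)) ?sum_nat_const ?card_ord ?muln1 // => l _.
by case: (val (i l) == 0%N).
Qed.

Lemma allnz_iff (i : J) : [forall l, val (i l) != 0%N] = (zs i == 0%N).
Proof. by rewrite /zs sum_nat_eq0; apply: eq_forallb => l; rewrite eqb0. Qed.

Lemma i0_iff (i : J) : (i == i0) = (ss i == 0%N).
Proof.
rewrite /ss sum_nat_eq0.
apply/eqP/forallP => [->|h] .
  by move=> l; rewrite /i0 ffunE /= eqxx.
apply/ffunP => l; apply: val_inj; rewrite /i0 ffunE /=.
by move: (h l); rewrite eqb0 negbK => /eqP.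
Qed.

Lemma single (i : J) : ss i == 1%N ->
  exists l, (val (i l) != 0%N) && [forall j, (j == l) || (val (i j) == 0%N)].
Proof.
move/sum_nat_eq1 => [l [_ hl hj]]; exists l; apply/andP; split.
  by move: hl; case: (val (i l) != 0%N).
apply/forallP => j; case: (eqVneq j l) => //= ne.
by move: (hj j ne isT); case: (val (i j) == 0%N).
Qed.

Lemma sum_i0 (F : J -> C) : \sum_(i : J) (i == i0)%:R * F i = F i0.
Proof.
rewrite (bigD1 i0) //= eqxx mul1r big1 ?addr0 // => i /negbTE ->; by rewrite mul0r.
Qed.

Section Comb.
Variable c : J -> C.
Hypothesis hc0 : forall i, 0 <= c i.
Hypothesis hc1 : \sum_(i : J) c i = 1.
Hypothesis hci0 : c i0 = DD^-1.

Definition AA := \sum_(i : J) [forall l, val (i l) != 0%N]%:R * c i.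
Definition X l := \sum_(i : J) (val (i l) == 0%N)%:R * c i.
Definition Y l := \sum_(i : J) [forall j, (j == l) || (val (i j) == 0%N)]%:R * c i.
Definition Yp l := \sum_(i : J)
   ((val (i l) != 0%N) && [forall j, (j == l) || (val (i j) == 0%N)])%:R * c i.

Lemma sumX : \sum_l X l = \sum_(i : J) (zs i)%:R * c i.
Proof.
rewrite /X exchange_big /=; apply: eq_bigr => i _.
by rewrite -mulr_suml /zs natr_sum.
Qed.

Lemma sumYp : \sum_l Yp l = \sum_(i : J)
   (\sum_l ((val (i l) != 0%N) && [forall j, (j == l) || (val (i j) == 0%N)]))%:R * c i.
Proof.
rewrite /Yp exchange_big /=; apply: eq_bigr => i _.
by rewrite -mulr_suml natr_sum.
Qed.

Lemma Yp_ge0 l : 0 <= Yp l.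
Proof. by apply: sumr_ge0 => i _; rewrite mulr_ge0. Qed.

Lemma Y_split l : Y l = c i0 + Yp l.
Proof.
rewrite /Y /Yp -(sum_i0 c) -big_split /=; apply: eq_bigr => i _.
rewrite -mulrDl -natrD; congr (_%:R * _).
case: (eqVneq (val (i l)) 0%N) => hz /=.
  rewrite addn0; congr nat_of_bool.
  rewrite i0_iff /ss sum_nat_eq0; apply: eq_forallb => j.
  by case: (eqVneq j l) => [->|] /=; rewrite ?hz ?eqb0 ?negbK.
have -> : (i == i0) = false.
  by apply/negbTE; rewrite i0_iff /ss (bigD1 l) //= hz.
by [].
Qed.

Lemma key2 (hN : (1 <= N)%N) :
  \sum_l X l + (N - 1)%:R * AA <= (N - 1)%:R + DD^-1.
Proof.
have -> : (N - 1)%:R + DD^-1 = \sum_(i : J) ((N - 1) + (ss i == 0%N))%:R * c i.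
  under eq_bigr do rewrite natrD mulrDl.
  rewrite big_split /= -mulr_sumr hc1 mulr1 -hci0 -(sum_i0 c).
  by congr (_ + _); apply: eq_bigr => i _; rewrite i0_iff.
have -> : \sum_l X l + (N - 1)%:R * AA =
   \sum_(i : J) (zs i + (N - 1) * (zs i == 0%N))%:R * c i.
  under [RHS]eq_bigr do rewrite natrD natrM mulrDl -mulrA.
  rewrite big_split /= sumX -mulr_sumr /AA; congr (_ + _ * _).
  by apply: eq_bigr => i _; rewrite allnz_iff.
apply: ler_sum => i _; apply: ler_wpM2r => //; rewrite ler_nat.
have e := zs_ss i.
case: (eqVneq (zs i) 0%N) => hz; case: (eqVneq (ss i) 0%N) => hs /=; lia.
Qed.

Lemma key3 (hN : (3 <= N)%N) :
  \sum_l X l + (N - 2)%:R * AA <= (N - 2)%:R + 2%:R * DD^-1 + \sum_l Yp l.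
Proof.
have -> : (N - 2)%:R + 2%:R * DD^-1 + \sum_l Yp l = \sum_(i : J) ((N - 2) + 2 * (ss i == 0%N) +
   \sum_l ((val (i l) != 0%N) && [forall j, (j == l) || (val (i j) == 0%N)]))%:R * c i.
  under [RHS]eq_bigr do rewrite natrD mulrDl natrD mulrDl natrM -mulrA.
  rewrite !big_split /= -mulr_sumr hc1 mulr1 sumYp -mulr_sumr -hci0 -(sum_i0 c).
  by congr (_ + _ * _ + _); apply: eq_bigr => i _; rewrite i0_iff.
have -> : \sum_l X l + (N - 2)%:R * AA =
   \sum_(i : J) (zs i + (N - 2) * (zs i == 0%N))%:R * c i.
  under [RHS]eq_bigr do rewrite natrD natrM mulrDl -mulrA.
  rewrite big_split /= sumX -mulr_sumr /AA; congr (_ + _ * _).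
  by apply: eq_bigr => i _; rewrite allnz_iff.
apply: ler_sum => i _; apply: ler_wpM2r => //; rewrite ler_nat.
have e := zs_ss i.
set T := (\sum_l _)%N.
have hT : ((ss i == 1%N) <= T)%N.
  case: (eqVneq (ss i) 1%N) => // /eqP /single [l hl].
  by rewrite /T (bigD1 l) //= hl.
case: (eqVneq (zs i) 0%N) => hz; case: (eqVneq (ss i) 0%N) => hs;
  case: (eqVneq (ss i) 1%N) => h1 /=; move: hT; rewrite ?h1 /=; lia.
Qed.


Hypothesis hXY : forall l, (d l)%:R * X l = (DD / (d l)%:R) * Y l.

Definition SS : C := \sum_l ((d l)%:R ^+ 2)^-1.

Lemma Xe l : X l = ((d l)%:R ^+ 2)^-1 + (DD / (d l)%:R ^+ 2) * Yp l.
Proof.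
have h := hXY l.
have -> : X l = (d l)%:R^-1 * ((DD / (d l)%:R) * Y l).
  by rewrite -h mulrA mulVf ?d_neq0 ?mul1r.
rewrite Y_split hci0; field.
by rewrite d_neq0 DD_neq0.
Qed.

Lemma X_lb l : ((d l)%:R ^+ 2)^-1 <= X l.
Proof.
rewrite Xe lerDl; apply: mulr_ge0 (Yp_ge0 l).
by rewrite divr_ge0 ?exprn_ge0 ?ler0n // ltW // DD_gt0.
Qed.

Lemma X_lb3 l (hD : (d l)%:R ^+ 2 <= DD) : ((d l)%:R ^+ 2)^-1 + Yp l <= X l.
Proof.
rewrite Xe lerD2l -subr_ge0.
have -> : DD / (d l)%:R ^+ 2 * Yp l - Yp l = (DD / (d l)%:R ^+ 2 - 1) * Yp l by ring.
apply: mulr_ge0 (Yp_ge0 l); rewrite subr_ge0.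
have dp : 0 < (d l)%:R ^+ 2 :> C by rewrite exprn_gt0 // ltr0n hd.
by rewrite ler_pdivlMr // mul1r.
Qed.

Lemma final2 (hN : (2 <= N)%N) :
  DD ^+ 2 / KK * AA <= DD / KK * (DD + (N.-1)%:R^-1 - DD / (N.-1)%:R * SS).
Proof.
have n1p : 0 < (N.-1)%:R :> C by rewrite ltr0n; lia.
have k2 := key2 (ltnW hN).
have hS : SS <= \sum_l X l by apply: ler_sum => l _; exact: X_lb.
have e1 : (N - 1)%:R = (N.-1)%:R :> C by rewrite subn1.
rewrite e1 in k2.
set n1 := (N.-1)%:R in n1p k2 *.
have sl : 0 <= n1 + DD^-1 - SS - n1 * AA.
  have : 0 <= (n1 + DD^-1 - (\sum_l X l + n1 * AA)) + (\sum_l X l - SS).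
    by apply: addr_ge0; rewrite subr_ge0.
  congr (0 <= _); ring.
rewrite -subr_ge0.
have -> : DD / KK * (DD + n1^-1 - DD / n1 * SS) - DD ^+ 2 / KK * AA =
   (DD / KK) * (DD / n1) * (n1 + DD^-1 - SS - n1 * AA).
  by field; rewrite DD_neq0 (lt0r_neq0 n1p) (lt0r_neq0 KK_gt0).
apply: mulr_ge0 sl; apply: mulr_ge0; apply: divr_ge0; apply: ltW;
  by [exact: DD_gt0|exact: KK_gt0|exact: n1p].
Qed.

Lemma final3 (hN : (3 <= N)%N) (hD : forall l, (d l)%:R ^+ 2 <= DD) :
  DD ^+ 2 / KK * AA <= DD / KK * (DD + 2 / (N - 2)%:R - DD / (N - 2)%:R * SS).
Proof.
have n2p : 0 < (N - 2)%:R :> C by rewrite ltr0n; lia.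
have k3 := key3 hN.
have hS : SS + \sum_l Yp l <= \sum_l X l.
  by rewrite /SS -big_split /=; apply: ler_sum => l _; exact: X_lb3.
set n2 := (N - 2)%:R in n2p k3 *.
have sl : 0 <= n2 + 2%:R * DD^-1 - SS - n2 * AA.
  have : 0 <= (n2 + 2%:R * DD^-1 + \sum_l Yp l - (\sum_l X l + n2 * AA)) +
              (\sum_l X l - (SS + \sum_l Yp l)).
    by apply: addr_ge0; rewrite subr_ge0.
  congr (0 <= _); ring.
rewrite -subr_ge0.
have -> : DD / KK * (DD + 2 / n2 - DD / n2 * SS) - DD ^+ 2 / KK * AA =
   (DD / KK) * (DD / n2) * (n2 + 2%:R * DD^-1 - SS - n2 * AA).
  by field; rewrite DD_neq0 (lt0r_neq0 n2p) (lt0r_neq0 KK_gt0).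
apply: mulr_ge0 sl; apply: mulr_ge0; apply: divr_ge0; apply: ltW;
  by [exact: DD_gt0|exact: KK_gt0|exact: n2p].
Qed.

Lemma final1 (hN : (1 <= N)%N) : DD ^+ 2 / KK * AA <= DD ^+ 2 / KK * (1 - DD^-1).
Proof.
apply: ler_wpM2l; first by apply: divr_ge0; apply: ltW; [exact: exprn_gt0 DD_gt0|exact: KK_gt0].
rewrite -hc1 -hci0 -(sum_i0 c) lerBrDr /AA -big_split /=; apply: ler_sum => i _.
rewrite -mulrDl ler_piMl //.
case: (eqVneq i i0) => [->|]; last by rewrite addr0; case: [forall l, _].
rewrite addrC; set l0 := Ordinal hN.
have -> : [forall l, val (i0 l) != 0%N] = false.
  by apply/negbTE/forallPn; exists l0; rewrite /i0 ffunE.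
by rewrite addr0.
Qed.
End Comb.

Lemma pure_bound (hN : (1 <= N)%N) psi (hpsi : \sum_x psi x * (psi x)^* = 1) :
  corr_frob2 kappa G (pmx psi) <= mbound d kappa.
Proof.
set c := cc (pmx psi).
have hc0 : forall i, 0 <= c i by move=> i; exact: cc_ge0.
have hc1 : \sum_(i : J) c i = 1 by exact: cc_sum1.
have hci0 : c i0 = DD^-1 by exact: cc_i0.
have hXY : forall l, (d l)%:R * X c l = (DD / (d l)%:R) * Y c l by move=> l; exact: XY.
rewrite corr_cc -/c -/(AA c).
have eD : ((\prod_(l < N) d l)%N)%:R = DD by rewrite natr_prod.
rewrite /mbound eD -/KK -/SS.
case: (eqVneq N 1%N) => [N1|N1] /=.
  apply: le_trans (final1 c hc0 hc1 hci0 hN) _.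
  set l0 := Ordinal hN.
  have uniq : forall l : 'I_N, l = l0 by move=> l; apply: val_inj => /=; have := ltn_ord l; lia.
  have sum1 : forall F : 'I_N -> C, \sum_l F l = F l0.
    by move=> F; rewrite (bigD1 l0) //= big_pred0 ?addr0 // => l; rewrite (uniq l) eqxx.
  have prod1 : forall F : 'I_N -> C, \prod_l F l = F l0.
    by move=> F; rewrite (bigD1 l0) //= big_pred0 ?mulr1 // => l; rewrite (uniq l) eqxx.
  rewrite sum1 /DD /KK !prod1 le_eqVlt; apply/orP; left; apply/eqP.
  by field; rewrite d_neq0 kappa_neq0.
case: ifP => [_|hc].
  by apply: (final2 c hc0 hc1 hci0 hXY); lia.
have hN3 : (3 <= N)%N by move: hc; case: eqVneq => //= N2 _; lia.
apply: (final3 c hc0 hc1 hci0 hXY hN3) => l.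
move/negbT: hc; rewrite negb_or => /andP[_ hc].
set dm := (\max_(l < N) d l)%N in hc.
have dmp : (0 < dm)%N.
  exact: (leq_trans (hd (Ordinal hN)) (@leq_bigmax _ d (Ordinal hN))).
have dmC : 0 < (dm%:R ^+ 2 : C) by rewrite exprn_gt0 // ltr0n.
rewrite ltr_pdivrMr // mul1r -natrX /DD -natr_prod ltr_nat -leqNgt in hc.
rewrite /DD -natrX -natr_prod ler_nat; apply: leq_trans hc.
by rewrite leq_exp2r // (@leq_bigmax _ d l).
Qed.
End Pure.

Section Mixed.
Variable C : numClosedFieldType.

Lemma jensen (K : finType) (lam z : K -> C) (hl0 : forall k, 0 <= lam k)
  (hl1 : \sum_k lam k = 1) :
  `|\sum_k lam k * z k| ^+ 2 <= \sum_k lam k * `|z k| ^+ 2.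
Proof.
set m := \sum_k lam k * z k.
have hm : \sum_k lam k * (z k)^* = m^*.
  rewrite /m rmorph_sum; apply: eq_bigr => k _.
  by rewrite rmorphM /= (conj_Creal (ger0_real (hl0 k))).
have h : \sum_k lam k * ((z k - m) * (z k - m)^*) =
         \sum_k lam k * (z k * (z k)^*) - m * m^*.
  transitivity (\sum_k (lam k * (z k * (z k)^*) - (lam k * z k) * m^* - m * (lam k * (z k)^*)
                 + m * m^* * lam k)).
    by apply: eq_bigr => k _; rewrite rmorphB /=; ring.
  rewrite !big_split /= !sumrN -!mulr_suml -!mulr_sumr hm hl1 -/m; ring.
have h0 : 0 <= \sum_k lam k * ((z k - m) * (z k - m)^*).
  by apply: sumr_ge0 => k _; rewrite mulr_ge0 ?mul_conjC_ge0.
rewrite h subr_ge0 in h0.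
rewrite normCK; apply: le_trans h0 _.
by rewrite le_eqVlt; apply/orP; left; apply/eqP; apply: eq_bigr => k _; rewrite normCK.
Qed.

End Mixed.

Section Aux.
Local Open Scope sesquilinear_scope.

Lemma lemma2_aux (C : numClosedFieldType) (N : nat) (d : 'I_N -> nat)
    (kappa : 'I_N -> C)
    (G : forall l : 'I_N, 'I_((d l) ^ 2) -> 'M[C]_(d l))
    (hN : (1 <= N)%N)
    (hd : forall l, (0 < d l)%N)
    (hbasis : forall l, basis_of fullv [seq G l i | i <- enum 'I_((d l) ^ 2)])
    (hG0 : forall l (i : 'I_((d l) ^ 2)), val i = 0%N -> G l i = 1%:M)
    (htr : forall l (i : 'I_((d l) ^ 2)), (0 < val i)%N -> \tr (G l i) = 0)
    (horth : forall l (i i' : 'I_((d l) ^ 2)), (0 < val i)%N -> (0 < val i')%N ->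
        \tr (adj (G l i) *m G l i') = kappa l * (i == i')%:R)
    (hkappa : forall l, 1 <= kappa l)
    (rho : 'M[C]_#|Idx d|)
    (hrho : is_state rho) :
  corr_frob2 kappa G rho <= mbound d kappa.
Proof.
case: hrho => [[hadj hpsd] htr1].
have hnorm : rho \is normalmx.
  apply/normalmxP; have -> : rho ^t* = rho by rewrite -map_trmx; exact: hadj.
  by [].
move/orthomx_spectralP: hnorm.
set P := spectralmx rho; set lam := spectral_diag rho => hsp.
have hU : P \is unitarymx := spectral_unitarymx rho.
have PP : P *m P ^t* = 1%:M := unitarymxP hU.
rewrite invmx_unitary // in hsp.
pose psi (k x : 'I_#|Idx d|) := (P k x)^*.
have hpsi : forall k : 'I_#|Idx d|, \sum_x psi k x * (psi k x)^* = 1.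
  move=> k; have := congr1 (fun A : 'M[C]_#|Idx d| => A k k) PP; rewrite !mxE eqxx /=.
  move=> h; apply: (etrans _ h).
  by apply: eq_bigr => x _; rewrite /psi conjCK !mxE mulrC.
have hlam : forall k, 0 <= lam 0 k.
  move=> k; pose v : 'cV[C]_#|Idx d| := P ^t* *m delta_mx k 0.
  have av : adj v = delta_mx 0 k *m P.
    rewrite /v /adj map_mxM trmx_mul; congr (_ *m _); apply/matrixP => i j; rewrite !mxE.
      by rewrite rmorph_nat andbC.
    exact: conjCK.
  have := hpsd v; rewrite av hsp /v !mulmxA.
  rewrite -(mulmxA _ P (P ^t*)) PP mulmx1 -(mulmxA _ P (P ^t*)) PP mulmx1.
  by rewrite -rowE -colE !mxE eqxx mulr1n.
have hsum : \sum_k lam 0 k = 1.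
  rewrite -htr1 hsp mxtrace_mulC mulmxA PP mul1mx mxtrace_diag //.
have hdec : rho = \sum_k lam 0 k *: pmx C N d (psi k).
  apply/matrixP => x y; rewrite hsp summxE !mxE.
  apply: eq_bigr => k _; rewrite !mxE /psi conjCK.
  rewrite (bigD1 k) //= big1 ?addr0; last first.
    move=> j jk; rewrite !mxE (_ : (j == k) = false) ?mulr0n ?mulr0 //; exact: negbTE jk.
  by rewrite !mxE eqxx mulr1n; ring.
have hlin : forall i, corr_tensor kappa G rho i =
    \sum_k lam 0 k * corr_tensor kappa G (pmx C N d (psi k)) i.
  move=> i; rewrite /corr_tensor hdec mulmx_suml raddf_sum mulr_sumr.
  by apply: eq_bigr => k _; rewrite -scalemxAl /= mxtraceZ mulrCA.
rewrite /corr_frob2.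
apply: (@le_trans _ _ (\sum_i \sum_k lam 0 k * `|corr_tensor kappa G (pmx C N d (psi k)) i| ^+ 2)).
  by apply: ler_sum => i _; rewrite hlin; apply: jensen.
rewrite exchange_big /=.
apply: (@le_trans _ _ (\sum_k lam 0 k * mbound d kappa)).
  apply: ler_sum => k _; rewrite -mulr_sumr; apply: ler_wpM2l => //.
  exact: (pure_bound _ _ _ _ _ hd hG0 htr horth hkappa hN _ (hpsi k)).
by rewrite -mulr_suml hsum mul1r.
Qed.

End Aux.

Theorem lemma2 (C : numClosedFieldType) (N : nat) (d : 'I_N -> nat)
    (kappa : 'I_N -> C)
    (G : forall l : 'I_N, 'I_((d l) ^ 2) -> 'M[C]_(d l))
    (hN : (1 <= N)%N)
    (hd : forall l, (0 < d l)%N)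
    (hbasis : forall l, basis_of fullv [seq G l i | i <- enum 'I_((d l) ^ 2)])
    (hG0 : forall l (i : 'I_((d l) ^ 2)), val i = 0%N -> G l i = 1%:M)
    (htr : forall l (i : 'I_((d l) ^ 2)), (0 < val i)%N -> \tr (G l i) = 0)
    (horth : forall l (i i' : 'I_((d l) ^ 2)), (0 < val i)%N -> (0 < val i')%N ->
        \tr (adj (G l i) *m G l i') = kappa l * (i == i')%:R)
    (hkappa : forall l, 1 <= kappa l)
    (rho : 'M[C]_#|Idx d|)
    (hrho : is_state rho) :
  corr_frob2 kappa G rho <= mbound d kappa.
Proof. exact: lemma2_aux. Qed.
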